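(* Let $\Omega\subseteq\mathbb{R}^n$ be open, let $f_1,\dots,f_m:\Omega\to\mathbb{R}$ be differentiable, and let $W\subseteq\Omega$ be convex and bounded. Suppose there is $L\ge 0$ such that $$\|\nabla f_i(y)-\nabla f_i(z)\|\le L\|y-z\|\qquad\text{for all }y,z\in W,\ i=1,\dots,m,$$ and set $M=\sup_{i=1,\dots,m,\ x\in W}\|\nabla f_i(x)\|$ (which is finite). Then for all $y,z\in W$: 1. $\|\Lambda f(y)-\Lambda f(z)\|\le\sqrt{2LM}\,\|y-z\|^{1/2}$, so $x\mapsto\Lambda f(x)$ is Hölder continuous on $W$ with exponent $1/2$; 2. $\big|\,\|\Lambda f(y)\|-\|\Lambda f(z)\|\,\big|\le L\|y-z\|$, so $x\mapsto\|\Lambda f(x)\|$ is Lipschitz continuous on $W$.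
   Context: $\mathbb{R}^n$ carries the standard inner product $\langle\cdot,\cdot\rangle$ and Euclidean norm $\|\cdot\|$. For $x\in\Omega$, the (multiobjective) steepest descent direction is $$\Lambda f(x):=\operatorname{argmin}_{v\in\mathbb{R}^n}\Big(\max_{i=1,\dots,m}\langle v,\nabla f_i(x)\rangle+\tfrac12\|v\|^2\Big),$$ (the minimizer is unique since the objective is strongly convex). *)

(* Defs.v *)
From mathcomp Require Import all_boot.
From Stdlib Require Import Reals ClassicalEpsilon.
Open Scope R_scope.

Definition vec (n : nat) := 'I_n -> R.

Definition vzero {n : nat} : vec n := fun _ => 0.
Definition vadd {n : nat} (u v : vec n) : vec n := fun i => u i + v i.
Definition vsub {n : nat} (u v : vec n) : vec n := fun i => u i - v i.
Definition vscale {n : nat} (a : R) (u : vec n) : vec n := fun i => a * u i.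

Definition dot {n : nat} (u v : vec n) : R := \big[Rplus/0]_(i < n) (u i * v i).
Definition norm {n : nat} (u : vec n) : R := sqrt (dot u u).

Definition is_open {n : nat} (Omega : vec n -> Prop) : Prop :=
  forall x, Omega x -> exists r, r > 0 /\ forall y, norm (vsub y x) < r -> Omega y.

Definition is_convex {n : nat} (W : vec n -> Prop) : Prop :=
  forall x y t, W x -> W y -> 0 <= t <= 1 ->
    W (vadd (vscale (1 - t) x) (vscale t y)).

Definition is_bounded {n : nat} (W : vec n -> Prop) : Prop :=
  exists B, forall x, W x -> norm x <= B.

Definition has_gradient {n : nat} (f : vec n -> R) (x g : vec n) : Prop :=
  forall eps, eps > 0 -> exists delta, delta > 0 /\
    forall y, norm (vsub y x) < delta ->
      Rabs (f y - f x - dot g (vsub y x)) <= eps * norm (vsub y x).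

(* max_{i = 0..m-1} F i  (meaningful for m >= 1) *)
Fixpoint maxn_R (m : nat) (F : nat -> R) : R :=
  match m with
  | O => F O
  | S O => F O
  | S k => Rmax (maxn_R k F) (F k)
  end.

(* The objective of the steepest descent subproblem, where grad i x is
   the gradient of f_i at x. *)
Definition sd_obj {n : nat} (m : nat) (grad : nat -> vec n -> vec n)
  (x v : vec n) : R :=
  maxn_R m (fun i => dot v (grad i x)) + / 2 * (norm v) ^ 2.

(* Lambda f(x) := argmin_v sd_obj (chosen by Hilbert's epsilon; the
   minimizer exists and is unique). *)
Definition Lambda {n : nat} (m : nat) (grad : nat -> vec n -> vec n)
  (x : vec n) : vec n :=
  epsilon (inhabits vzero) (fun v => forall w, sd_obj m grad x v <= sd_obj m grad x w).

(* Main.v *)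
Require Import Defs.
From Stdlib Require Import Reals.
From HB Require Import structures.
From mathcomp Require Import all_boot all_order all_algebra.
From mathcomp Require Import all_classical all_reals all_analysis.
From mathcomp Require Import Rstruct Rstruct_topology.
Import Order.TTheory GRing.Theory Num.Theory.
Import numFieldNormedType.Exports.
Local Open Scope classical_set_scope.
Local Open Scope ring_scope.

Lemma my_contD (T : topologicalType) (f g : T -> R) :
  continuous f -> continuous g -> continuous (fun x => Rplus (f x) (g x)).
Proof. move=> cf cg x. apply (@continuousD _ R^o _ f g x (cf x) (cg x)). Qed.
Lemma my_contM (T : topologicalType) (f g : T -> R) :
  continuous f -> continuous g -> continuous (fun x => Rmult (f x) (g x)).
Proof. move=> cf cg x. apply (continuousM (cf x) (cg x)). Qed.
Lemma my_contMax (T : topologicalType) (f g : T -> R) :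
  continuous f -> continuous g -> continuous (fun x => Rmax (f x) (g x)).
Proof. move=> cf cg x.
have -> : (fun x => Rmax (f x) (g x)) = f \max g by apply: funext => v; rewrite RmaxE.
apply (continuous_max (cf x) (cg x)). Qed.

Lemma cont_big n (I : eqType) (r : seq I) (P : pred I) (h : I -> 'rV[R]_n -> R) :
  (forall i, continuous (h i)) ->
  continuous (fun v : 'rV[R]_n => \big[Rplus/IZR 0]_(i <- r | P i) h i v).
Proof.
move=> hc; elim: r => [|a r IH].
  have -> : (fun v : 'rV[R]_n => \big[Rplus/IZR 0]_(i <- [::] | P i) h i v) = fun _ => IZR 0.
    by apply: funext => v; rewrite big_nil.
  exact: cst_continuous.
case Pa: (P a).
  have -> : (fun v : 'rV[R]_n => \big[Rplus/IZR 0]_(i <- a :: r | P i) h i v) =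
   (fun v => Rplus (h a v) (\big[Rplus/IZR 0]_(i <- r | P i) h i v)).
    by apply: funext => v; rewrite big_cons Pa.
  exact: my_contD.
have -> : (fun v : 'rV[R]_n => \big[Rplus/IZR 0]_(i <- a :: r | P i) h i v) =
   (fun v => (\big[Rplus/IZR 0]_(i <- r | P i) h i v)).
  by apply: funext => v; rewrite big_cons Pa.
exact: IH.
Qed.

Lemma cont_dot n (g : vec n) :
  continuous (fun v : 'rV[R]_n => dot (fun i => v ord0 i) g).
Proof.
rewrite /dot; apply: cont_big => i.
apply: my_contM; last exact: cst_continuous.
exact: coord_continuous.
Qed.

Lemma cont_maxn (m : nat) n (h : nat -> 'rV[R]_n -> R) :
  (forall i, continuous (h i)) ->
  continuous (fun v => maxn_R m (fun i => h i v)).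
Proof.
move=> hc; elim: m => [|[|k] IH] //=.
exact: my_contMax.
Qed.

Lemma exists_argmin n (F : vec n -> R) (K : R) : Rle 0 K ->
  continuous (fun v : 'rV[R]_n => F (fun i => v ord0 i)) ->
  (forall v, (forall i, Rle (- K) (v i) /\ Rle (v i) K) \/ Rle (F vzero) (F v)) ->
  exists c, forall w, Rle (F c) (F w).
Proof.
move=> /RleP K0 cF Hb.
pose A := [set v : 'rV[R]_n | forall i, `[- K, K]%classic (v ord0 i)].
have cA : compact A.
  apply: (@rV_compact _ _ (fun=> `[- K, K]%classic)) => _.
  exact: segment_compact.
have A0 : A (0 : 'rV[R]_n).
  move=> i /=; rewrite mxE in_itv /= oppr_le0 K0; done.
have [c cA' cmin] := EVT_min_rV (ex_intro _ _ A0) cA (continuous_subspaceT cF).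
exists (fun i => c ord0 i) => w.
have inA (v : vec n) : (forall i, Rle (- K) (v i) /\ Rle (v i) K) -> (\row_i v i) \in A.
  move=> hv; rewrite inE => i /=; rewrite mxE in_itv /=.
  by have [h1 h2] := hv i; apply/andP; split; apply/RleP.
have rowK (v : vec n) : (fun i => (\row_j v j) ord0 i) = v.
  by apply: funext => i; rewrite mxE.
case: (Hb w) => [hw|hw].
  by have := cmin _ (inA _ hw); rewrite rowK => /RleP.
apply: Rle_trans hw.
have : (\row_i (vzero : vec n) i) \in A.
  apply: inA => i; rewrite /vzero; split; apply/RleP; rewrite ?oppr_le0 //.
move=> /cmin; rewrite rowK => /RleP //.
Qed.
Local Close Scope ring_scope.
Local Close Scope classical_set_scope.
From Stdlib Require Import Ring Field Lra Psatz RIneq Classical ClassicalEpsilon.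
Open Scope R_scope.
Set Implicit Arguments.

Lemma recr n (F : 'I_n.+1 -> R) :
  \big[Rplus/0]_(i<n.+1) F i = \big[Rplus/0]_(i<n) F (widen_ord (leqnSn n) i) + F ord_max.
Proof. exact: big_ord_recr. Qed.

Lemma sum_lin n (a b : R) (F G : 'I_n -> R) :
  \big[Rplus/0]_(i<n) (a * F i + b * G i) =
  a * \big[Rplus/0]_(i<n) F i + b * \big[Rplus/0]_(i<n) G i.
Proof.
elim: n F G => [|n IH] F G; first by rewrite !big_ord0; ring.
rewrite !recr IH; ring.
Qed.

Lemma sum_ext n (F G : 'I_n -> R) : (forall i, F i = G i) ->
  \big[Rplus/0]_(i<n) F i = \big[Rplus/0]_(i<n) G i.
Proof. by move=> h; apply: eq_bigr => i _. Qed.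

Lemma sum_nonneg n (F : 'I_n -> R) : (forall i, 0 <= F i) ->
  0 <= \big[Rplus/0]_(i<n) F i.
Proof.
elim: n F => [|n IH] F h; first by rewrite big_ord0; lra.
rewrite recr; have := IH (fun i => F (widen_ord (leqnSn n) i)) (fun i => h _).
have := h ord_max; lra.
Qed.

Lemma D1 n (F:'I_n->R) j : \big[Rplus/0]_(i<n) F i = F j + \big[Rplus/0]_(i<n | i != j) F i.
Proof. exact: (bigD1 j). Qed.

Lemma sum_term n (F : 'I_n -> R) j : (forall i, 0 <= F i) ->
  F j <= \big[Rplus/0]_(i<n) F i.
Proof.
move=> h; rewrite (D1 F j).
have : 0 <= \big[Rplus/0]_(i < n | i != j) F i.
  by apply: big_ind => //; [lra | move=> x y; lra].
lra.
Qed.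

Lemma dot_comm n (u v : vec n) : dot u v = dot v u.
Proof. by apply: sum_ext => i; ring. Qed.

Lemma dot_lin n (a b : R) (u v w : vec n) :
  dot (fun i => a * u i + b * v i) w = a * dot u w + b * dot v w.
Proof.
rewrite /dot -sum_lin; apply: sum_ext => i; ring.
Qed.

Lemma dot_nonneg n (u : vec n) : 0 <= dot u u.
Proof. apply: sum_nonneg => i; nra. Qed.

Lemma dot_zero n (u : vec n) : dot vzero u = 0.
Proof.
have -> : dot vzero u = dot (fun i => 0 * u i + 0 * u i) u.
  by apply: sum_ext => i; rewrite /vzero; ring.
rewrite dot_lin; ring.
Qed.

Lemma norm_sq n (u : vec n) : norm u ^ 2 = dot u u.
Proof. rewrite /norm; apply: pow2_sqrt; exact: dot_nonneg. Qed.

Lemma norm_nonneg n (u : vec n) : 0 <= norm u.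
Proof. exact: sqrt_pos. Qed.

Lemma coord_le n (u : vec n) i : Rabs (u i) <= norm u.
Proof.
rewrite -sqrt_Rsqr_abs /norm; apply: sqrt_le_1_alt.
rewrite /Rsqr /dot; apply: (sum_term (fun k => u k * u k) i) => j; nra.
Qed.

Lemma CS n (u v : vec n) : Rabs (dot u v) <= norm u * norm v.
Proof.
have quad t : 0 <= dot u u + 2 * t * dot u v + t ^ 2 * dot v v.
  have := dot_nonneg (fun i => 1 * u i + t * v i).
  rewrite dot_lin (dot_comm _ (fun i => _ + _)) dot_lin (dot_comm _ (fun i => _ + _)) dot_lin.
  rewrite (dot_comm v u); nra.
have key : dot u v ^ 2 <= dot u u * dot v v.
  have hv := dot_nonneg v; have hu := dot_nonneg u.
  case: (Req_dec (dot v v) 0) => hv0.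
    case: (Req_dec (dot u v) 0) => huv.
      rewrite huv hv0; nra.
    have := quad (- (dot u u + 1) / (2 * dot u v)).
    rewrite hv0.
    have -> : dot u u + 2 * (- (dot u u + 1) / (2 * dot u v)) * dot u v = -1.
      by field.
    lra.
  have := quad (- dot u v / dot v v).
  have -> : dot u u + 2 * (- dot u v / dot v v) * dot u v + (- dot u v / dot v v) ^ 2 * dot v v
     = (dot u u * dot v v - dot u v ^ 2) / dot v v by field.
  move=> h.
  have hvp : 0 < dot v v by lra.
  have : 0 <= (dot u u * dot v v - dot u v ^ 2) / dot v v * dot v v by nra.
  have -> : (dot u u * dot v v - dot u v ^ 2) / dot v v * dot v v = dot u u * dot v v - dot u v ^ 2 by field.
  lra.
rewrite -sqrt_Rsqr_abs /norm -sqrt_mult_alt; last exact: dot_nonneg.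
apply: sqrt_le_1_alt; rewrite /Rsqr; nra.
Qed.

Lemma maxn_S (m : nat) (F : nat -> R) : maxn_R m.+2 F = Rmax (maxn_R m.+1 F) (F m.+1).
Proof. by []. Qed.

Lemma maxn_ge (m : nat) (F : nat -> R) (i : nat) : (i < m)%nat -> F i <= maxn_R m F.
Proof.
elim: m => [|[|k] IH] //= hi.
  by move: hi; rewrite ltnS leqn0 => /eqP ->; lra.
move: hi; rewrite ltnS leq_eqVlt => /orP [/eqP ->| hi].
  exact: Rmax_r.
apply: Rle_trans (IH hi) _; exact: Rmax_l.
Qed.

Lemma maxn_le (m : nat) (F : nat -> R) (B : R) : (0 < m)%nat ->
  (forall i, (i < m)%nat -> F i <= B) -> maxn_R m F <= B.
Proof.
elim: m => [|[|k] IH] //= _ h.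
  by apply: h.
apply: Rmax_lub; last by apply: h.
by apply: IH => // i hi; apply: h; apply: ltn_trans hi _.
Qed.

Lemma maxn_scal (m : nat) (F : nat -> R) (c : R) : 0 <= c ->
  maxn_R m (fun i => c * F i) = c * maxn_R m F.
Proof.
move=> hc; elim: m => [|m IH]; first by [].
case: m IH => [|m] IH; first by [].
by rewrite !maxn_S IH RmaxRmult.
Qed.

Lemma maxn_ge0 (m : nat) (F : nat -> R) : F O <= maxn_R m F.
Proof.
case: m => [|k]; first by simpl; lra.
by apply: maxn_ge.
Qed.

Lemma dot_sub_r n (w p q : vec n) : dot w (vsub p q) = dot w p - dot w q.
Proof.
rewrite dot_comm (dot_comm w p) (dot_comm w q).
have -> : dot (vsub p q) w = dot (fun i => 1 * p i + (-1) * q i) w.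
  by apply: sum_ext => i; rewrite /vsub; ring.
rewrite dot_lin; ring.
Qed.

Lemma dot_zero_r n (u : vec n) : dot u vzero = 0.
Proof. by rewrite dot_comm dot_zero. Qed.

Lemma norm_zero n : norm (@vzero n) = 0.
Proof. by rewrite /norm dot_zero sqrt_0. Qed.

Lemma maxn_zero (m : nat) : maxn_R m (fun _ => 0) = 0.
Proof.
have := maxn_scal m (fun _ => 0) (Rle_refl 0).
have -> : (fun _ : nat => 0 * 0) = (fun _ => 0) by apply: funext => i; ring.
move=> ->; ring.
Qed.

Lemma lim0 (A B : R) : 0 <= B -> (forall t, 0 < t <= 1 -> 0 <= A + t * B) -> 0 <= A.
Proof.
move=> hB h; apply: Rnot_lt_le => hA.
have hBA : 0 < B - A by lra.
set t := - A / (2 * (B - A)).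
have ht0 : 0 < t by apply: Rdiv_lt_0_compat; lra.
have ht1 : t <= 1.
  have e : t * (2 * (B - A)) = - A by rewrite /t; field; lra.
  nra.
have := h t (conj ht0 ht1).
have -> : A + t * B = A * (B - 2 * A) / (2 * (B - A)) by rewrite /t; field; lra.
move=> h2.
have : A * (B - 2 * A) < 0 by nra.
have : 0 <= A * (B - 2 * A) / (2 * (B - A)) * (2 * (B - A)) by nra.
have -> : A * (B - 2 * A) / (2 * (B - A)) * (2 * (B - A)) = A * (B - 2 * A) by field; lra.
lra.
Qed.

Lemma dot_lin2 n (a b c d : R) (u v : vec n) :
  dot (fun i => a * u i + b * v i) (fun i => c * u i + d * v i) =
  a * c * dot u u + (a * d + b * c) * dot u v + b * d * dot v v.
Proof.
rewrite /dot.
rewrite (@sum_ext _ _ (fun i => (a*c) * (u i * u i) + 1 * ((a*d+b*c) * (u i * v i) + (b*d) * (v i * v i)))); last by move=> i; ring.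
rewrite sum_lin sum_lin; ring.
Qed.

Lemma absb (x c : R) : Rabs x <= c -> - c <= x <= c.
Proof. have := Rle_abs x; have := Rle_abs (- x); rewrite Rabs_Ropp; lra. Qed.

Lemma sd_exists n (m : nat) (grad : nat -> vec n -> vec n) (x : vec n) :
  exists v, forall w, sd_obj m grad x v <= sd_obj m grad x w.
Proof.
set G := norm (grad O x).
have hG : 0 <= G by apply: norm_nonneg.
apply: (@exists_argmin n (sd_obj m grad x) (2 * G)); first lra.
- have -> : (fun v : 'rV[R]_n => sd_obj m grad x (fun i => v ord0 i)) =
     (fun v => Rplus (maxn_R m (fun i => dot (fun j => v ord0 j) (grad i x)))
                     (Rmult (/ 2) (dot (fun j => v ord0 j) (fun j => v ord0 j)))).
    by apply: funext => v; rewrite /sd_obj norm_sq.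
  apply: my_contD.
    by apply: cont_maxn => i; apply: cont_dot.
  apply: my_contM; first exact: cst_continuous.
  have -> : (fun v : 'rV[R]_n => dot (fun j => v ord0 j) (fun j => v ord0 j)) =
    (fun v => \big[Rplus/0]_(j < n) Rmult (v ord0 j) (v ord0 j)) by [].
  apply: cont_big => j; apply: my_contM; exact: coord_continuous.
- move=> v.
  case: (Classical_Prop.classic (forall i, - (2 * G) <= v i /\ v i <= 2 * G)) => hv; first by left.
  right.
  have [i hi] := Classical_Pred_Type.not_all_ex_not _ _ hv.
  have hvi : 2 * G < norm v.
    have := coord_le v i; apply: Rlt_le_trans.
    by apply: Rnot_le_lt => h; apply: hi; apply: absb.
  rewrite /sd_obj.
  have -> : (fun i => dot vzero (grad i x)) = (fun _ => 0)
    by apply: funext => j; apply: dot_zero.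
  rewrite maxn_zero norm_zero.
  have h1 := maxn_ge0 m (fun i => dot v (grad i x)).
  have h2 := CS v (grad O x).
  move: h2; rewrite -/G => h2.
  have hn := norm_nonneg v.
  have : - (norm v * G) <= dot v (grad O x) by have := @absb _ _ h2; lra.
  move: h1 => /= h1 h3.
  nra.
Qed.

Section Opt.
Variables (n m : nat) (grad : nat -> vec n -> vec n) (x : vec n).
Hypothesis hm : (0 < m)%nat.

Let hx (w : vec n) := maxn_R m (fun i => dot w (grad i x)).

Lemma Lambda_min : forall w, sd_obj m grad x (Lambda m grad x) <= sd_obj m grad x w.
Proof.
rewrite /Lambda; apply: (epsilon_spec (inhabits vzero) (fun v => forall w, sd_obj m grad x v <= sd_obj m grad x w)).
exact: sd_exists.
Qed.

Lemma hx_conv (v w : vec n) (t : R) : 0 <= t <= 1 ->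
  hx (fun i => (1 - t) * v i + t * w i) <= (1 - t) * hx v + t * hx w.
Proof.
move=> ht; apply: maxn_le => // i hi.
rewrite dot_lin.
have := @maxn_ge _ (fun i => dot v (grad i x)) _ hi.
have := @maxn_ge _ (fun i => dot w (grad i x)) _ hi.
rewrite /hx; nra.
Qed.

Lemma VI0 (w : vec n) :
  hx (Lambda m grad x) + dot (Lambda m grad x) (Lambda m grad x)
  <= hx w + dot (Lambda m grad x) w.
Proof.
set v := Lambda m grad x.
have hmin := Lambda_min.
set A := hx w - hx v - dot v v + dot v w.
set B := / 2 * (dot v v - 2 * dot v w + dot w w).
have hB : 0 <= B.
  have := dot_nonneg (fun i => 1 * v i + (-1) * w i).
  rewrite dot_lin2 /B; nra.
suff : 0 <= A by rewrite /A; lra.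
apply: (lim0 hB) => t ht.
have := hmin (fun i => (1 - t) * v i + t * w i).
rewrite /sd_obj !norm_sq -/(hx v) -/(hx _).
have hc := hx_conv v w (conj (Rlt_le _ _ (proj1 ht)) (proj2 ht)).
rewrite dot_lin2.
move=> h; fold v in h.
have e : t * (A + t*B) = ((1-t)*hx v + t*hx w + /2*((1-t)*(1-t)*dot v v + ((1-t)*t + t*(1-t))*dot v w + t*t*dot w w)) - (hx v + /2 * dot v v)
  by rewrite /A /B; field.
have : t * (A + t * B) >= 0.
  rewrite e; lra.
move=> h2; destruct ht as [ht0 ht1].
apply: Rnot_lt_le => h3.
have : t * (A + t * B) < 0 by nra.
lra.
Qed.

Lemma opt_eq : hx (Lambda m grad x) = - dot (Lambda m grad x) (Lambda m grad x).
Proof.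
set v := Lambda m grad x.
have h0 := VI0 vzero.
have hz : hx vzero = 0.
  rewrite /hx.
  have -> : (fun i => dot vzero (grad i x)) = (fun _ => 0)
    by apply: funext => j; apply: dot_zero.
  exact: maxn_zero.
rewrite hz dot_zero_r in h0.
have h2 := VI0 (fun i => 2 * v i + 0 * v i).
have e : hx (fun i => 2 * v i + 0 * v i) = 2 * hx v.
  rewrite /hx -maxn_scal; last lra.
  congr maxn_R; apply: funext => j; rewrite dot_lin; ring.
have e2 : dot v (fun i => 2 * v i + 0 * v i) = 2 * dot v v.
  rewrite dot_comm dot_lin; ring.
rewrite e e2 in h2.
rewrite -/v in h0 h2. lra.
Qed.

Lemma VI (w : vec n) : 0 <= hx w + dot (Lambda m grad x) w.
Proof. have := VI0 w; rewrite opt_eq; lra. Qed.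

End Opt.

Lemma h_lip n m (grad : nat -> vec n -> vec n) (y z w : vec n) (c : R) :
  (0 < m)%nat ->
  (forall i, (i < m)%nat -> norm (vsub (grad i y) (grad i z)) <= c) ->
  maxn_R m (fun i => dot w (grad i y)) <= maxn_R m (fun i => dot w (grad i z)) + norm w * c
  /\ maxn_R m (fun i => dot w (grad i z)) <= maxn_R m (fun i => dot w (grad i y)) + norm w * c.
Proof.
move=> hm hc; have hw := norm_nonneg w.
split; apply: maxn_le => // i hi.
- have := @maxn_ge _ (fun i => dot w (grad i z)) _ hi.
  have := CS w (vsub (grad i y) (grad i z)); rewrite dot_sub_r => hcs.
  have := @absb _ _ hcs; have := hc i hi => /= hci.
  have := norm_nonneg (vsub (grad i y) (grad i z)); nra.
- have := @maxn_ge _ (fun i => dot w (grad i y)) _ hi.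
  have := CS w (vsub (grad i y) (grad i z)); rewrite dot_sub_r => hcs.
  have := @absb _ _ hcs; have := hc i hi => /= hci.
  have := norm_nonneg (vsub (grad i y) (grad i z)); nra.
Qed.

Theorem theorem3p1 (n m : nat) (Omega W : vec n -> Prop)
  (f : nat -> vec n -> R) (grad : nat -> vec n -> vec n) (L M : R) :
  (0 < m)%nat ->
  is_open Omega ->
  (forall i x, (i < m)%nat -> Omega x -> has_gradient (f i) x (grad i x)) ->
  (forall x, W x -> Omega x) ->
  is_convex W ->
  is_bounded W ->
  0 <= L ->
  (forall i y z, (i < m)%nat -> W y -> W z ->
     norm (vsub (grad i y) (grad i z)) <= L * norm (vsub y z)) ->
  is_lub (fun r => exists i x, (i < m)%nat /\ W x /\ r = norm (grad i x)) M ->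
  forall y z, W y -> W z ->
    norm (vsub (Lambda m grad y) (Lambda m grad z))
      <= sqrt (2 * L * M) * sqrt (norm (vsub y z))
    /\ Rabs (norm (Lambda m grad y) - norm (Lambda m grad z))
      <= L * norm (vsub y z).
Proof.
move=> hm _ _ _ _ _ hL hlip [hub _] y z Wy Wz.
set a := Lambda m grad y; set b := Lambda m grad z.
set d := norm (vsub y z).
have hd : 0 <= d := norm_nonneg _.
have Mb : forall x, W x -> norm (grad O x) <= M.
  by move=> x Wx; apply: hub; exists O, x.
have hM : 0 <= M by have := Mb y Wy; have := norm_nonneg (grad O y); lra.
set hy := fun w => maxn_R m (fun i => dot w (grad i y)).
set hz := fun w => maxn_R m (fun i => dot w (grad i z)).
have ea : hy a = - dot a a := @opt_eq n m grad y hm.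
have eb : hz b = - dot b b := @opt_eq n m grad z hm.
have vab : 0 <= hy b + dot a b := @VI n m grad y hm b.
have vba : 0 <= hz a + dot b a := @VI n m grad z hm a.
have hc : forall i, (i < m)%nat -> norm (vsub (grad i y) (grad i z)) <= L * d.
  by move=> i hi; apply: hlip.
have [la1 la2] := @h_lip n m grad y z a _ hm hc.
have [lb1 lb2] := @h_lip n m grad y z b _ hm hc.
rewrite -/(hy a) -/(hz a) in la1 la2.
rewrite -/(hy b) -/(hz b) in lb1 lb2.
have A0 := norm_nonneg a; have B0 := norm_nonneg b.
have Aq : norm a ^ 2 = dot a a := norm_sq a.
have Bq : norm b ^ 2 = dot b b := norm_sq b.
have cab : dot a b <= norm a * norm b.
  have := @absb _ _ (CS a b); lra.
have bnda : - (norm a * M) <= hy a.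
  have h1 : dot a (grad O y) <= hy a by apply: maxn_ge0.
  have := @absb _ _ (CS a (grad O y)); have := Mb y Wy; nra.
have bndb : - (norm b * M) <= hz b.
  have h1 : dot b (grad O z) <= hz b by apply: maxn_ge0.
  have := @absb _ _ (CS b (grad O z)); have := Mb z Wz; nra.
have AM : norm a <= M by nra.
have BM : norm b <= M by nra.
rewrite (dot_comm b a) in vba.
split.
- have hD : dot (vsub a b) (vsub a b) <= 2 * L * M * d.
    have -> : dot (vsub a b) (vsub a b) = dot a a - 2 * dot a b + dot b b.
      have -> : vsub a b = (fun i => 1 * a i + (-1) * b i).
        by apply: funext => i; rewrite /vsub; ring.
      rewrite dot_lin2; ring.
    have hLd : 0 <= L * d by nra.
    nra.
  rewrite -sqrt_mult_alt; last nra.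
  by apply: sqrt_le_1_alt.
- have hLd : 0 <= L * d by nra.
  have k1 : norm b * (norm b - norm a - L * d) <= 0 by nra.
  have k2 : norm a * (norm a - norm b - L * d) <= 0 by nra.
  have k1' : norm b - norm a <= L * d.
    case: (Rle_lt_dec (norm b - norm a) (L * d)) => // hh.
    have : 0 < norm b by lra.
    nra.
  have k2' : norm a - norm b <= L * d.
    case: (Rle_lt_dec (norm a - norm b) (L * d)) => // hh.
    have : 0 < norm a by lra.
    nra.
  apply: Rabs_le; split; lra.
Qed.
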